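(* Let $\mathcal{D}=(V,\Phi)$ be a finite directed graph with adjacency matrix $M\in\{0,1\}^{V\times V}$ ($M_{vw}=1$ iff $(v,w)\in\Phi$). Let $\boldsymbol{\alpha}(t),\boldsymbol{\beta}(t)\in[0,+\infty)^V$ ($t\ge0$) be vector sequences such that $\boldsymbol{\alpha}(t)$ is non-decreasing in every component and $\boldsymbol{\beta}(t)$ is convergent, and let $\mathbf{r},\mathbf{s}\in(0,+\infty)^V$ with $r_v=s_v^{-1}$ for all $v$. Set $W_{vw}=r_vM_{vw}s_w$. Define $\boldsymbol{\omega}(t),\boldsymbol{\eta}(t)$ by $\boldsymbol{\omega}(0)=\boldsymbol{\eta}(0)=\mathbf{1}$ and, for all $v\in V$, $t\ge0$, $$\omega_v(t+1)=\frac{1}{1+\alpha_v(t)+\sum_{w}W_{vw}(1-\omega_w(t))},\qquad \eta_v(t+1)=1+\beta_v(t)+\sum_w M_{vw}\,\omega_w(t)\,\eta_w(t).$$ Assume that for every node $v$ belonging to a non-trivial strongly connected component of $\mathcal{D}$ there exists a node $w$ reachable from $v$ such that the sequence $\alpha_w(t)$ is not identically zero. Then $\boldsymbol{\eta}(t)$ converges, and $\boldsymbol{\omega}(t)$ converges and is non-increasing in every component. Moreover, $\lim_{t\to\infty}\omega_v(t)<1$ for every node $v$ such that there exists $w$ reachable from $v$ with $\alpha_w(t)$ not identically zero.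
   Context: A path from $v$ to $w$ of length $l\ge0$ is a list $(u_0,\dots,u_l)$ with $u_0=v$, $u_l=w$, $(u_{i-1},u_i)\in\Phi$; $w$ is reachable from $v$ if such a path exists for some $l\ge0$. A strongly connected component of $\mathcal{D}$ is a maximal induced subdigraph $\mathcal{D}[U]$ in which every node is reachable from every other node; it is trivial if it consists of a single node without a self-loop, and non-trivial otherwise. *)

(* Defs.v *)
From HB Require Import structures.
From mathcomp Require Import all_boot all_order all_algebra.
From mathcomp Require Import all_classical all_reals all_analysis.
Set Implicit Arguments. Unset Strict Implicit. Unset Printing Implicit Defensive.
Import Order.TTheory GRing.Theory Num.Theory.
Local Open Scope ring_scope.

(* Digraph D = (V, Phi) with V : finType and Phi : rel V (the arc relation).
   Reachability (paths of length l >= 0) is fingraph's [connect Phi]. *)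

Definition adjM {R : pzRingType} {V : finType} (Phi : rel V) (v w : V) : R :=
  (Phi v w)%:R.

Definition scc {V : finType} (Phi : rel V) (v : V) : {set V} :=
  [set u | connect Phi v u && connect Phi u v].

Definition trivial_scc {V : finType} (Phi : rel V) (U : {set V}) : bool :=
  (#|U| == 1%N) && [forall u in U, ~~ Phi u u].

Fixpoint omega_seq {R : realFieldType} {V : finType} (Phi : rel V)
  (alpha : V -> nat -> R) (r s : V -> R) (t : nat) : V -> R :=
  match t with
  | 0%N => fun _ => 1
  | t'.+1 => fun v =>
      1 / (1 + alpha v t' +
           \sum_(w : V) (r v * adjM Phi v w * s w) * (1 - omega_seq Phi alpha r s t' w))
  end.

Fixpoint eta_seq {R : realFieldType} {V : finType} (Phi : rel V)
  (alpha beta : V -> nat -> R) (r s : V -> R) (t : nat) : V -> R :=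
  match t with
  | 0%N => fun _ => 1
  | t'.+1 => fun v =>
      1 + beta v t' +
      \sum_(w : V) adjM Phi v w * omega_seq Phi alpha r s t' w * eta_seq Phi alpha beta r s t' w
  end.

(* Main.v *)
Require Import Defs.
From HB Require Import structures.
From mathcomp Require Import all_boot all_order all_algebra.
From mathcomp Require Import all_classical all_reals all_analysis.
From mathcomp Require Import ring lra.
Import Order.TTheory GRing.Theory Num.Theory numFieldNormedType.Exports.
Local Open Scope classical_set_scope.
Local Open Scope ring_scope.

Set Implicit Arguments. Unset Strict Implicit. Unset Printing Implicit Defensive.


Section Helpers.
Variable R : realType.

Lemma cvg_sumR (V : finType) (f : V -> nat -> R) (l : V -> R) :
  (forall v, f v @ \oo --> l v) ->
  (fun n => \sum_(v : V) f v n) @ \oo --> \sum_(v : V) l v.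
Proof.
move=> H; elim: (index_enum V) => [|v s IH].
  rewrite big_nil; under eq_fun do rewrite big_nil; exact: cvg_cst.
rewrite big_cons; under eq_fun do rewrite big_cons.
exact: cvgD.
Qed.

Lemma fin_eventually (V : finType) (P : V -> nat -> Prop) :
  (forall v, exists N, forall n, (N <= n)%N -> P v n) ->
  exists N, forall n, (N <= n)%N -> forall v, P v n.
Proof.
move=> H.
suff [N HN] : exists N, forall n, (N <= n)%N -> forall v, v \in index_enum V -> P v n.
  by exists N => n Nn v; apply: HN => //; exact: mem_index_enum.
elim: (index_enum V) => [|v s [N IH]]; first by exists 0%N.
have [M HM] := H v; exists (maxn N M) => n; rewrite geq_max => /andP[Nn Mn] u.
rewrite in_cons => /orP[/eqP->|us]; first exact: HM.
exact: IH.
Qed.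

Lemma fin_small (V : finType) (P : V -> R -> Prop) :
  (forall v, exists e, 0 < e /\ forall e', 0 < e' -> e' <= e -> P v e') ->
  exists e, 0 < e /\ forall v, P v e.
Proof.
move=> H.
suff [e [e0 He]] : exists e, 0 < e /\ forall e', 0 < e' -> e' <= e ->
   forall v, v \in index_enum V -> P v e'.
  by exists e; split => // v; apply: He => //; exact: mem_index_enum.
elim: (index_enum V) => [|v s [e [e0 IH]]]; first by exists 1.
have [f [f0 Hf]] := H v; exists (Order.min e f); split.
  by rewrite lt_min e0 f0.
move=> e' e'0; rewrite le_min => /andP[e'e e'f] u.
rewrite in_cons => /orP[/eqP->|us]; first exact: Hf.
exact: IH.
Qed.

Lemma limnE (u : nat -> R) (l : R) : u @ \oo --> l -> limn u = l.
Proof. by move=> ul; apply: cvg_lim => //; exact: norm_hausdorff. Qed.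

Lemma cvg_le_const (u : nat -> R) (l a : R) :
  u @ \oo --> l -> (exists N, forall n, (N <= n)%N -> u n <= a) -> l <= a.
Proof.
move=> ul [N HN]; rewrite -(limnE ul); apply: limr_le; first exact: cvgP ul.
by exists N => // n /HN.
Qed.

Lemma cvg_ge_const (u : nat -> R) (l a : R) :
  u @ \oo --> l -> (exists N, forall n, (N <= n)%N -> a <= u n) -> a <= l.
Proof.
move=> ul [N HN]; rewrite -(limnE ul); apply: limr_ge; first exact: cvgP ul.
by exists N => // n /HN.
Qed.

Lemma cvg_eventually (u : nat -> R) (l e : R) :
  u @ \oo --> l -> 0 < e -> exists N, forall n, (N <= n)%N -> `|l - u n| <= e.
Proof.
move=> /cvgrPdist_le H e0; have [N _ HN] := H e e0.
by exists N => n Nn; apply: HN.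
Qed.

End Helpers.


Section Lin.
Variable R : realType.
Variable V : finType.

Fixpoint itlin (Ast : V -> V -> R) (c : V -> R) (k : nat) : V -> R :=
  if k is k'.+1 then fun v => c v + \sum_w Ast v w * itlin Ast c k' w
  else fun _ => 0.

Lemma le_sum_one (f : V -> R) (v : V) : (forall u, 0 <= f u) -> f v <= \sum_u f u.
Proof.
move=> f0; rewrite (bigD1 v) //= lerDl; apply: sumr_ge0 => u _; exact: f0.
Qed.

Section It.
Variables (Ast : V -> V -> R) (c : V -> R).
Hypothesis Ast0 : forall v w, 0 <= Ast v w.
Hypothesis c0 : forall v, 0 <= c v.

Lemma itlin_ge0 k v : 0 <= itlin Ast c k v.
Proof.
elim: k v => [|k IH] v //=; apply: addr_ge0 => //; apply: sumr_ge0 => w _.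
exact: mulr_ge0.
Qed.

Lemma itlin_incr k v : itlin Ast c k v <= itlin Ast c k.+1 v.
Proof.
elim: k v => [|k IH] v /=; first exact: (itlin_ge0 1).
rewrite lerD2l; apply: ler_sum => w _; exact: ler_wpM2l.
Qed.

Lemma itlin_bound (x : V -> R) (lam : R) :
  (forall v, 0 < x v) -> lam < 1 ->
  (forall v, \sum_w Ast v w * x w <= lam * x v) ->
  forall k v, itlin Ast c k v <= ((\sum_u c u / x u) / (1 - lam)) * x v.
Proof.
move=> x0 lam1 Hx; set C := (_ / _).
have C0 : 0 <= C.
  apply: divr_ge0; last by rewrite subr_ge0 ltW.
  by apply: sumr_ge0 => u _; apply: divr_ge0 => //; exact: ltW.
elim=> [|k IH] v /=; first by apply: mulr_ge0 => //; exact: ltW.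
apply: (@le_trans _ _ (c v + C * (lam * x v))).
  rewrite lerD2l; apply: (@le_trans _ _ (\sum_w Ast v w * (C * x w))).
    by apply: ler_sum => w _; apply: ler_wpM2l.
  under eq_bigr do rewrite mulrCA; rewrite -mulr_sumr.
  by apply: ler_wpM2l.
have : c v / x v <= \sum_u c u / x u.
  have := @le_sum_one (fun u => c u / x u) v; apply => u.
  by apply: divr_ge0 => //; exact: ltW.
have xv := x0 v.
have -> : \sum_u c u / x u = C * (1 - lam) by rewrite /C divfK // subr_eq0 gt_eqF.
rewrite ler_pdivrMr // => H.
lra.
Qed.

End It.

Lemma lin_cvg (A : nat -> V -> V -> R) (Ast : V -> V -> R)
  (b : nat -> V -> R) (bst : V -> R) (z : nat -> V -> R) (x : V -> R) (lam : R) (T : nat) :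
  (forall t v w, 0 <= A t v w) ->
  (forall v w, (fun t => A t v w) @ \oo --> Ast v w) ->
  (forall v, (fun t => b t v) @ \oo --> bst v) ->
  (forall v, 0 <= bst v) ->
  (forall v, 0 < x v) -> lam < 1 ->
  (forall t v, (T <= t)%N -> \sum_w A t v w * x w <= lam * x v) ->
  (forall t v, z t.+1 v = b t v + \sum_w A t v w * z t w) ->
  forall v, cvgn (fun t => z t v).
Proof.
move=> A0 Acvg bcvg bst0 x0 lam1 Hx zrec v0.
have lam0 : 0 <= lam.
  have S0 : 0 <= \sum_w A T v0 w * x w.
    by apply: sumr_ge0 => w _; apply: mulr_ge0 => //; exact: ltW.
  have := Hx T v0 (leqnn T); have := x0 v0; nra.
have Ast0 v w : 0 <= Ast v w.
  by apply: (cvg_ge_const (Acvg v w)); exists 0%N => n _.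
have AstX v : \sum_w Ast v w * x w <= lam * x v.
  apply: (@cvg_le_const _ (fun t => \sum_w A t v w * x w)).
    apply: cvg_sumR => w; apply: cvgM; [exact: Acvg | exact: cvg_cst].
  by exists T => t /Hx; apply.
pose es v := limn (fun k => itlin Ast bst k v).
have es_cvg v : (fun k => itlin Ast bst k v) @ \oo --> es v.
  apply: nondecreasing_is_cvgn.
    by apply/nondecreasing_seqP => k; exact: itlin_incr.
  exists (((\sum_u bst u / x u) / (1 - lam)) * x v) => _ [k _ <-].
  exact: itlin_bound.
have esfix v : es v = bst v + \sum_w Ast v w * es w.
  have H1 : (fun k => itlin Ast bst k.+1 v) @ \oo --> bst v + \sum_w Ast v w * es w.
    apply: cvgD; first exact: cvg_cst.
    apply: cvg_sumR => w; apply: cvgM; [exact: cvg_cst | exact: es_cvg].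
  have H2 : (fun k => itlin Ast bst k v) @ \oo --> bst v + \sum_w Ast v w * es w.
    by rewrite -cvg_shiftS.
  by rewrite /es (limnE H2).
pose e t v := z t v - es v.
pose eps t v := (b t v - bst v) + \sum_w (A t v w - Ast v w) * es w.
have erec t v : e t.+1 v = eps t v + \sum_w A t v w * e t w.
  rewrite /e /eps zrec esfix.
  have -> : \sum_w (A t v w - Ast v w) * es w =
            \sum_w A t v w * es w - \sum_w Ast v w * es w.
    by rewrite -sumrB; apply: eq_bigr => w _; rewrite mulrBl.
  have -> : \sum_w A t v w * (z t w - es w) =
            \sum_w A t v w * z t w - \sum_w A t v w * es w.
    by rewrite -sumrB; apply: eq_bigr => w _; rewrite mulrBr.
  ring.
have epscvg v : (fun t => eps t v) @ \oo --> 0.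
  have H : (fun t => eps t v) @ \oo -->
       (bst v - bst v) + \sum_w (Ast v w - Ast v w) * es w.
    apply: cvgD; first by apply: cvgB; [exact: bcvg | exact: cvg_cst].
    apply: cvg_sumR => w; apply: cvgM; last exact: cvg_cst.
    by apply: cvgB; [exact: Acvg | exact: cvg_cst].
  move: H; rewrite subrr add0r big1 // => w _; by rewrite subrr mul0r.
have ebound t v : `|e t.+1 v| <= `|eps t v| + \sum_w A t v w * `|e t w|.
  rewrite erec; apply: le_trans (ler_normD _ _) _; rewrite lerD2l.
  apply: le_trans (ler_norm_sum _ _ _) _; apply: ler_sum => w _.
  by rewrite normrM ger0_norm.
have claim d : 0 < d -> exists N, forall t, (N <= t)%N -> forall u, `|e t u| <= d * x u.
  move=> d0.
  have [N1 HN1] : exists N, forall t, (N <= t)%N ->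
      forall u, `|eps t u| <= d * (1 - lam) / 2 * x u.
    apply: fin_eventually => u.
    have pos : 0 < d * (1 - lam) / 2 * x u.
      by apply: mulr_gt0 => //; apply: divr_gt0 => //; apply: mulr_gt0 => //; rewrite subr_gt0.
    have [N HN] := cvg_eventually (epscvg u) pos.
    by exists N => t /HN; rewrite sub0r normrN.
  pose T1 := maxn T N1.
  pose C1 := \sum_u `|e T1 u| / x u.
  have C10 : 0 <= C1 by apply: sumr_ge0 => u _; apply: divr_ge0 => //; exact: ltW.
  have main k u : `|e (T1 + k)%N u| <= (lam ^+ k * C1 + d / 2) * x u.
    elim: k u => [|k IH] u.
      rewrite addn0 expr0 mul1r.
      have : `|e T1 u| / x u <= C1.
        by have := @le_sum_one (fun u => `|e T1 u| / x u) u; apply => w; apply: divr_ge0 => //; exact: ltW.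
      rewrite ler_pdivrMr // => H; have := x0 u; nra.
    rewrite addnS; apply: le_trans (ebound _ _) _.
    have h1 : `|eps (T1 + k)%N u| <= d * (1 - lam) / 2 * x u.
      by apply: HN1; apply: leq_trans (leq_maxr T N1) (leq_addr k T1).
    have K0 : 0 <= lam ^+ k * C1 + d / 2.
      by apply: addr_ge0; [apply: mulr_ge0 => //; exact: exprn_ge0 | apply: divr_ge0 => //; exact: ltW].
    have h2 : \sum_w A (T1 + k)%N u w * `|e (T1 + k)%N w| <=
              (lam ^+ k * C1 + d / 2) * (lam * x u).
      apply: (@le_trans _ _ (\sum_w A (T1 + k)%N u w * ((lam ^+ k * C1 + d / 2) * x w))).
        by apply: ler_sum => w _; apply: ler_wpM2l.
      under eq_bigr do rewrite mulrCA; rewrite -mulr_sumr; apply: ler_wpM2l => //.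
      by apply: Hx; apply: leq_trans (leq_maxl T N1) (leq_addr k T1).
    have E : d * (1 - lam) / 2 * x u + (lam ^+ k * C1 + d / 2) * (lam * x u) =
             (lam ^+ k.+1 * C1 + d / 2) * x u by rewrite exprS; ring.
    by rewrite -E; exact: lerD h1 h2.
  have lamn : `|lam| < 1 by rewrite ger0_norm.
  have pos2 : 0 < (d / 2) / (C1 + 1).
    by apply: divr_gt0; [apply: divr_gt0 | apply: ltr_wpDl].
  have [N2 HN2] := cvg_eventually (cvg_expr lamn) pos2.
  exists (T1 + N2)%N => t Ht u.
  have -> : t = (T1 + (t - T1))%N by rewrite subnKC // (leq_trans (leq_addr N2 T1) Ht).
  apply: le_trans (main _ _) _.
  have : (N2 <= t - T1)%N by rewrite leq_subRL // (leq_trans (leq_addr N2 T1) Ht).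
  move/HN2; rewrite sub0r normrN ger0_norm ?exprn_ge0 // ler_pdivlMr ?ltr_wpDl //.
  set q := lam ^+ _ => Hq.
  have q0 : 0 <= q by exact: exprn_ge0.
  have := x0 u; nra.
apply/cvg_ex; exists (es v0); apply/cvgrPdist_le => del del0.
have xv := x0 v0.
have [N HN] := claim (del / x v0) (divr_gt0 del0 xv).
exists N => // t /HN /(_ v0); by rewrite divfK ?gt_eqF // /e distrC.
Qed.

End Lin.

Unset Implicit Arguments.


Section Main.
Variables (R : realType) (V : finType) (Phi : rel V) (alpha beta : V -> nat -> R) (r s : V -> R).
Hypothesis a0 : forall v t, 0 <= alpha v t.
Hypothesis b0 : forall v t, 0 <= beta v t.
Hypothesis amono : forall v t, alpha v t <= alpha v t.+1.
Hypothesis bcvg : forall v, cvgn (beta v).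
Hypothesis r0 : forall v, 0 < r v.
Hypothesis s0 : forall v, 0 < s v.
Hypothesis rs : forall v, r v = (s v)^-1.
Hypothesis hyp : forall v, ~~ trivial_scc Phi (scc Phi v) ->
     exists w, connect Phi v w /\ exists t, alpha w t != 0.

Local Notation om t v := (omega_seq Phi alpha r s t v).
Local Notation M v w := (@adjM R V Phi v w).

Lemma cvgS (u : nat -> R) (l : R) : u @ \oo --> l -> (fun t => u t.+1) @ \oo --> l.
Proof. by rewrite -cvg_shiftS. Qed.

Lemma M0 v w : 0 <= M v w. Proof. by rewrite /adjM ler0n. Qed.
Lemma M1 v w : M v w <= 1. Proof. by rewrite /adjM; case: (Phi v w). Qed.

Definition den t v := 1 + alpha v t + \sum_w (r v * M v w * s w) * (1 - om t w).

Lemma omS t v : om t.+1 v = (den t v)^-1.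
Proof. by rewrite /= mul1r. Qed.

Lemma W0 v w : 0 <= r v * M v w * s w.
Proof. apply: mulr_ge0; last exact: ltW. apply: mulr_ge0; [exact: ltW | exact: M0]. Qed.

Lemma om_bounds t v : 0 < om t v <= 1.
Proof.
elim: t v => [|t IH] v; first by rewrite /= ltr01 lexx.
have d1 : 1 <= den t v.
  rewrite /den -addrA lerDl; apply: addr_ge0 => //; apply: sumr_ge0 => w _.
  apply: mulr_ge0; first exact: W0.
  by rewrite subr_ge0; case/andP: (IH w).
have dpos : 0 < den t v := lt_le_trans ltr01 d1.
by rewrite omS invr_gt0 dpos /= invf_le1.
Qed.

Lemma om_ge0 t v : 0 <= om t v. Proof. by case/andP: (om_bounds t v) => /ltW. Qed.
Lemma om_le1 t v : om t v <= 1. Proof. by case/andP: (om_bounds t v). Qed.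

Lemma den_pos t v : 0 < den t v.
Proof.
have := om_bounds t.+1 v; rewrite omS => /andP[]; by rewrite invr_gt0.
Qed.

Lemma om_decr t v : om t.+1 v <= om t v.
Proof.
elim: t v => [|t IH] v; first exact: om_le1.
rewrite omS [X in _ <= X]omS lef_pV2 ?posrE ?den_pos //.
rewrite /den; apply: lerD; first by rewrite lerD2l.
apply: ler_sum => w _; apply: ler_wpM2l; first exact: W0.
by rewrite lerD2l lerN2.
Qed.

Definition omst v := limn (fun t => om t v).

Lemma om_cvg v : (fun t => om t v) @ \oo --> omst v.
Proof.
apply: nonincreasing_is_cvgn.
  by apply/nonincreasing_seqP => t; exact: om_decr.
by exists 0 => _ [t _ <-]; exact: om_ge0.
Qed.

Lemma omst_le t v : omst v <= om t v.
Proof.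
have ni : nonincreasing_seq (fun k => om k v).
  by apply/nonincreasing_seqP => k; exact: om_decr.
exact: (nonincreasing_cvgn_ge ni (om_cvg v) t).
Qed.

Lemma omst_ge0 v : 0 <= omst v.
Proof. by apply: (cvg_ge_const (om_cvg v)); exists 0%N => n _; exact: om_ge0. Qed.

Lemma omst_le1 v : omst v <= 1.
Proof. exact: le_trans (omst_le 0 v) (om_le1 0 v). Qed.

Lemma alpha_mono v t0 t : (t0 <= t)%N -> alpha v t0 <= alpha v t.
Proof. by move=> h; apply: ((nondecreasing_seqP (alpha v)).1 (amono v)). Qed.

Lemma key t0 v :
  omst v * (1 + alpha v t0 + \sum_w (r v * M v w * s w) * (1 - omst w)) <= 1.
Proof.
apply: (@cvg_le_const _
  (fun t => om t.+1 v * (1 + alpha v t0 + \sum_w (r v * M v w * s w) * (1 - om t w)))).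
  apply: cvgM; first exact: cvgS (om_cvg v).
  apply: cvgD; first exact: cvg_cst.
  apply: cvg_sumR => w; apply: cvgM; first exact: cvg_cst.
  by apply: cvgB; [exact: cvg_cst | exact: om_cvg].
exists t0 => t Ht.
have E : om t.+1 v * den t v = 1 by rewrite omS mulVf // gt_eqF // den_pos.
apply: (@le_trans _ _ (om t.+1 v * den t v)); last by rewrite E.
apply: ler_wpM2l; first exact: om_ge0.
rewrite /den; apply: lerD => //; rewrite lerD2l; exact: alpha_mono.
Qed.


Definition y v := s v * (1 - omst v).
Definition Dc v w := omst v * M v w.
Definition Dop (f : V -> R) v := \sum_w Dc v w * f w.

Lemma Dc0 v w : 0 <= Dc v w.
Proof. apply: mulr_ge0; [exact: omst_ge0 | exact: M0]. Qed.

Lemma y0 v : 0 <= y v.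
Proof. apply: mulr_ge0; [exact: ltW | by rewrite subr_ge0 omst_le1]. Qed.

Lemma Dop_mono (f g : V -> R) v : (forall w, f w <= g w) -> Dop f v <= Dop g v.
Proof. move=> H; apply: ler_sum => w _; apply: ler_wpM2l => //; exact: Dc0. Qed.

Lemma Dop_ge0 (f : V -> R) v : (forall w, 0 <= f w) -> 0 <= Dop f v.
Proof. move=> H; apply: sumr_ge0 => w _; apply: mulr_ge0 => //; exact: Dc0. Qed.

Lemma Dop_om0 (f : V -> R) v : omst v = 0 -> Dop f v = 0.
Proof.
by move=> h; rewrite /Dop big1 // => w _; rewrite /Dc h !mul0r.
Qed.

Lemma Dy t0 v : Dop y v <= y v - omst v * s v * alpha v t0.
Proof.
have E : Dop y v = s v * omst v * \sum_w (r v * M v w * s w) * (1 - omst w).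
  rewrite /Dop mulr_sumr; apply: eq_bigr => w _; rewrite /Dc /y rs.
  by field; rewrite gt_eqF.
rewrite E /y; have K := key t0 v; have sv := s0 v.
set S := \sum_w _ in K *; set o := omst v in K *; set a := alpha v t0 in K *.
nra.
Qed.

Definition Dk k := iter k Dop y.

Lemma Dk_ge0 k v : 0 <= Dk k v.
Proof. elim: k v => [|k IH] v /=; [exact: y0 | exact: Dop_ge0]. Qed.

Lemma Dk_decr k v : Dk k.+1 v <= Dk k v.
Proof.
elim: k v => [|k IH] v.
  have := Dy 0 v; rewrite /Dk /= => H; apply: le_trans H _.
  rewrite lerBlDr lerDl; apply: mulr_ge0; last exact: a0.
  by apply: mulr_ge0; [exact: omst_ge0 | exact: ltW].
exact: Dop_mono.
Qed.

Lemma Dk_mono n m v : (n <= m)%N -> Dk m v <= Dk n v.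
Proof.
have ni : nonincreasing_seq (fun k => Dk k v).
  by apply/nonincreasing_seqP => k; exact: Dk_decr.
exact: ni.
Qed.

Lemma Dk_le_y k v : Dk k v <= y v.
Proof. exact: (Dk_mono 0 k v (leq0n k)). Qed.

Lemma y_pos_om0 v : omst v = 0 -> 0 < y v.
Proof. by move=> h; rewrite /y h subr0 mulr1. Qed.

Lemma chain (p : seq V) v : path Phi v p -> (exists t, alpha (last v p) t != 0) ->
  Dk (size p).+1 v < y v.
Proof.
elim: p v => [|u p IH] v /=.
  move=> _ [t0 at0].
  have apos : 0 < alpha v t0 by rewrite lt_def at0 a0.
  have [h|h] := eqVneq (omst v) 0.
    by rewrite /Dk /= Dop_om0 // y_pos_om0.
  have opos : 0 < omst v by rewrite lt_def h omst_ge0.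
  apply: le_lt_trans (Dy t0 v) _.
  by rewrite ltrBlDr ltrDl; apply: mulr_gt0 => //; apply: mulr_gt0.
move=> /andP[Pvu pu] H.
have IHu := IH u pu H.
have [h|h] := eqVneq (omst v) 0.
  by rewrite /Dk /= Dop_om0 // y_pos_om0.
have opos : 0 < omst v by rewrite lt_def h omst_ge0.
change (Dop (Dk (size p).+1) v < y v).
apply: lt_le_trans (Dk_decr 0 v).
rewrite /Dop (bigD1 u) //= [X in _ < X](bigD1 u) //=.
apply: ltr_leD.
  rewrite ltr_pM2l //; rewrite /Dc /adjM Pvu mulr1 //.
apply: ler_sum => w _; apply: ler_wpM2l; first exact: Dc0.
exact: (Dk_le_y (size p).+1 w).
Qed.

Definition good v := exists w, connect Phi v w /\ exists t, alpha w t != 0.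

Lemma good_ev v : good v -> exists N, forall n, (N <= n)%N -> Dk n v < y v.
Proof.
move=> [w [/connectP [p pth ->] H]].
exists (size p).+1 => n Hn; apply: le_lt_trans (Dk_mono _ _ v Hn) _.
exact: chain.
Qed.

Lemma omst_lt1 v : good v -> omst v < 1.
Proof.
move=> /good_ev [N HN]; have := HN N (leqnn N).
have := Dk_ge0 N v; rewrite /y => h1 h2; have := s0 v.
have := omst_le1 v; nra.
Qed.


Definition h v := #|[set u | connect Phi v u]%SET|.

Lemma h_pos v : (0 < h v)%N.
Proof. by rewrite /h card_gt0; apply/set0Pn; exists v; rewrite inE connect0. Qed.

Lemma bad_desc v w : ~ good v -> Phi v w -> (h w < h v)%N.
Proof.
move=> ngv Pvw.
have Hp : [set u | connect Phi w u]%SET \proper [set u | connect Phi v u]%SET.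
  rewrite properE; apply/andP; split.
    apply/fintype.subsetP => u; rewrite !inE => cwu; exact: connect_trans (connect1 Pvw) cwu.
  apply/subsetPn; exists v; first by rewrite inE connect0.
  rewrite inE; apply/negP => cwv.
  apply: ngv; apply: hyp.   rewrite /trivial_scc negb_and.
  have vU : v \in scc Phi v by rewrite inE connect0.
  have wU : w \in scc Phi v by rewrite inE (connect1 Pvw) cwv.
  case: (eqVneq w v) => [ewv|nwv].
    apply/orP; right; apply/negP => /forallP /(_ v) /implyP /(_ vU).
    by rewrite -{2}ewv Pvw.
  apply/orP; left; apply/negP => /cards1P [x Ux].
  move: vU wU; rewrite Ux !inE => /eqP vx /eqP wx.
  by rewrite wx vx eqxx in nwv.
exact: proper_card Hp.
Qed.

Definition Cz : R := (#|V|.+1)%:R.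
Definition Z v := Cz ^+ h v.
Lemma Cz_ge1 : 1 <= Cz. Proof. by rewrite /Cz ler1n. Qed.
Lemma Cz_gt0 : 0 < Cz. Proof. exact: lt_le_trans ltr01 Cz_ge1. Qed.
Lemma Z_pos v : 0 < Z v. Proof. by rewrite /Z exprn_gt0 // Cz_gt0. Qed.

Lemma DZ_bad v : ~ good v -> Dop Z v < Z v.
Proof.
move=> ngv.
have step : Dop Z v <= \sum_(w : V) Cz ^+ (h v).-1.
  apply: ler_sum => w _; rewrite /Dc /Z /adjM.
  case: (boolP (Phi v w)) => P /=.
    rewrite mulr1; apply: (@le_trans _ _ (Cz ^+ h w)).
      by apply: ler_piMl; [apply: exprn_ge0; exact: ltW Cz_gt0 | exact: omst_le1].
    apply: ler_weXn2l; first exact: Cz_ge1.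
    by rewrite -ltnS prednK ?h_pos // bad_desc.
  by rewrite mulr0 mul0r; apply: exprn_ge0; exact: ltW Cz_gt0.
apply: le_lt_trans step _.
have hv := h_pos v; rewrite /Z.
set k := (h v).-1; have -> : h v = k.+1 by rewrite prednK.
rewrite sumr_const exprS mulrC -mulr_natr ltr_pM2l ?exprn_gt0 ?Cz_gt0 //.
by rewrite /Cz ltr_nat.
Qed.

Lemma itlinS k v : itlin Dc y k.+1 v = y v + Dop (itlin Dc y k) v.
Proof. by []. Qed.
Lemma DkS k v : Dk k.+1 v = Dop (Dk k) v.
Proof. by []. Qed.

Lemma itlin_split k v : itlin Dc y k.+1 v = itlin Dc y k v + Dk k v.
Proof.
elim: k v => [|k IH] v.
  by rewrite itlinS /Dop big1 ?addr0 ?add0r // => w _; rewrite /= mulr0.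
rewrite itlinS [itlin Dc y k.+1 v]itlinS DkS /Dop.
under eq_bigr do rewrite IH mulrDr.
by rewrite big_split /= addrA.
Qed.

Lemma DopY N v : Dop (itlin Dc y N) v = itlin Dc y N v + Dk N v - y v.
Proof. by rewrite -itlin_split itlinS; ring. Qed.

Lemma Dop_lin (f g : V -> R) (e : R) v :
  Dop (fun w => f w + e * g w) v = Dop f v + e * Dop g v.
Proof. by rewrite /Dop mulr_sumr -big_split; apply: eq_bigr => w _ /=; ring. Qed.

Lemma certificate : exists x : V -> R, (forall v, 0 < x v) /\ forall v, Dop x v < x v.
Proof.
have [N HN] : exists N, forall n, (N <= n)%N -> forall v, good v -> Dk n v < y v.
  apply: fin_eventually => v.
  have [gv|ngv] := pselect (good v).
    by have [N HN] := good_ev v gv; exists N => n /HN H _.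
  by exists 0%N => n _ /ngv.
have Y0 v : 0 <= itlin Dc y N v := itlin_ge0 Dc0 y0 N v.
have [e [e0 He]] : exists e, 0 < e /\ forall v,
    Dop (itlin Dc y N) v + e * Dop Z v < itlin Dc y N v + e * Z v.
  apply: fin_small => v.
  have [gv|ngv] := pselect (good v).
    have g0 : 0 < y v - Dk N v by rewrite subr_gt0 HN.
    set g := y v - Dk N v in g0.
    set d := Dop Z v - Z v.
    have d1 : 0 < 1 + `|d| by apply: (lt_le_trans ltr01); rewrite lerDl.
    exists (g / (1 + `|d|)); split; first exact: divr_gt0.
    move=> e' e'0 e'le.
    have E : g / (1 + `|d|) * (1 + `|d|) = g by rewrite divfK // gt_eqF.
    have nd : d <= `|d| := ler_norm d.
    have nd0 : 0 <= `|d| := normr_ge0 d.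
    set q := g / (1 + `|d|) in e'le E.
    have q0 : 0 < q by rewrite /q divr_gt0.
    have H : e' * d < g by nra.
    rewrite DopY; rewrite /d /g in H; nra.
  exists 1; split => // e' e'0 _.
  rewrite DopY; have := Dk_le_y N v; have := DZ_bad v ngv; nra.
exists (fun v => itlin Dc y N v + e * Z v); split.
  move=> v; have := Y0 v; have := mulr_gt0 e0 (Z_pos v); lra.
by move=> v; rewrite (Dop_lin (itlin Dc y N) Z e v); exact: He.
Qed.

Lemma etaS t v : eta_seq Phi alpha beta r s t.+1 v =
  1 + beta v t + \sum_w M v w * om t w * eta_seq Phi alpha beta r s t w.
Proof. by []. Qed.

Lemma eta_cvg_all v : cvgn (fun t => eta_seq Phi alpha beta r s t v).
Proof.
have [x [x0 Hx]] := certificate.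
pose S v := \sum_w M v w * x w.
have DS u : Dop x u = omst u * S u.
  by rewrite /Dop /S mulr_sumr; apply: eq_bigr => w _; rewrite /Dc mulrA.
have [e [e0 He]] : exists e, 0 < e /\ forall v, omst v * S v < (1 - e) * x v.
  apply: fin_small => u.
  have xv := x0 u.
  have gap : 0 < x u - omst u * S u by rewrite subr_gt0 -DS.
  exists ((x u - omst u * S u) / (2 * x u)); split.
    by apply: divr_gt0 => //; apply: mulr_gt0.
  move=> e' e'0 e'le.
  have E : (x u - omst u * S u) / (2 * x u) * (2 * x u) = x u - omst u * S u.
    by rewrite divfK // gt_eqF // mulr_gt0.
  set q := _ / _ in e'le E.
  nra.
set lam := 1 - e.
have lam1 : lam < 1 by rewrite /lam ltrBlDr ltrDl.
have [T HT] : exists T, forall t, (T <= t)%N -> forall u, om t.+1 u * S u <= lam * x u.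
  apply: fin_eventually => u.
  have gap : 0 < lam * x u - omst u * S u by rewrite subr_gt0.
  have cv : (fun t => om t.+1 u * S u) @ \oo --> omst u * S u.
    by apply: cvgM; [exact: cvgS (om_cvg u) | exact: cvg_cst].
  have [T HT] := cvg_eventually cv gap.
  exists T => t /HT; rewrite ler_distlC => /andP[_].
  by rewrite addrC subrK.
pose zeta t u := om t u * eta_seq Phi alpha beta r s t u.
have zcvg : forall u, cvgn (fun t => zeta t u).
  apply: (@lin_cvg R V (fun t u w => om t.+1 u * M u w) Dc
     (fun t u => om t.+1 u * (1 + beta u t)) (fun u => omst u * (1 + limn (beta u)))
     zeta x lam T).
  - move=> t u w; apply: mulr_ge0; [exact: om_ge0 | exact: M0].
  - by move=> u w; apply: cvgM; [exact: cvgS (om_cvg u) | exact: cvg_cst].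
  - move=> u; apply: cvgM; first exact: cvgS (om_cvg u).
    by apply: cvgD; [exact: cvg_cst | exact: bcvg u].
  - move=> u; apply: mulr_ge0; first exact: omst_ge0.
    apply: addr_ge0 => //; apply: (cvg_ge_const (bcvg u)).
    by exists 0%N => n _; exact: b0.
  - exact: x0.
  - exact: lam1.
  - move=> t u Ht.
    rewrite (_ : \sum_w _ = om t.+1 u * S u); first exact: HT.
    by rewrite /S mulr_sumr; apply: eq_bigr => w _; rewrite mulrA.
  - move=> t u; rewrite /zeta etaS mulrDr mulr_sumr; congr (_ + _).
    by apply: eq_bigr => w _; ring.
have E t : eta_seq Phi alpha beta r s t.+1 v =
    1 + beta v t + \sum_w M v w * zeta t w.
  by rewrite etaS; congr (_ + _); apply: eq_bigr => w _; rewrite mulrA.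
have H : (fun t => eta_seq Phi alpha beta r s t.+1 v) @ \oo -->
    1 + limn (beta v) + \sum_w M v w * limn (fun t => zeta t w).
  under eq_fun do rewrite E.
  apply: cvgD; first by apply: cvgD; [exact: cvg_cst | exact: bcvg v].
  by apply: cvg_sumR => w; apply: cvgM; [exact: cvg_cst | exact: zcvg w].
apply: (cvgP (1 + limn (beta v) + \sum_w M v w * limn (fun t => zeta t w))).
by rewrite -cvg_shiftS.
Qed.

End Main.

Theorem theorem2 (R : realType) (V : finType) (Phi : rel V)
  (alpha beta : V -> nat -> R) (r s : V -> R) :
  (forall v t, 0 <= alpha v t) ->
  (forall v t, 0 <= beta v t) ->
  (forall v t, alpha v t <= alpha v t.+1) ->
  (forall v, cvgn (beta v)) ->
  (forall v, 0 < r v) -> (forall v, 0 < s v) ->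
  (forall v, r v = (s v)^-1) ->
  (forall v, ~~ trivial_scc Phi (scc Phi v) ->
     exists w, connect Phi v w /\ exists t, alpha w t != 0) ->
  (forall v, cvgn (fun t => eta_seq Phi alpha beta r s t v)) /\
  (forall v, cvgn (fun t => omega_seq Phi alpha r s t v)) /\
  (forall v t, omega_seq Phi alpha r s t.+1 v <= omega_seq Phi alpha r s t v) /\
  (forall v, (exists w, connect Phi v w /\ exists t, alpha w t != 0) ->
     limn (fun t => omega_seq Phi alpha r s t v) < 1).
Proof.
move=> a0 b0 amono bcvg r0 s0 rs hyp.
split; first by move=> v; apply: eta_cvg_all.
split; first by move=> v; apply: om_cvg.
split; first by move=> v t; apply: om_decr.
by move=> v gv; apply: omst_lt1.
Qed.
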